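(* For every planar tree $t$, $\mathrm{GD}(t)=\mathrm{GD}(\iota(t))$.
   Context: A planar tree has linearly ordered children at each node, each node being a leaf or having $\ge2$ children (internal node); $\deg t$ = number of leaves minus one. For planar trees $s,r$, $s/r$ is the tree obtained by identifying the root of $s$ with the leftmost leaf of $r$. For $t$ of degree $n$, $\mathrm{GD}(t)=\{i\in\{1,\dots,n-1\}: t=s/r\text{ for some planar trees } s,r \text{ with }\deg s=i\}$. A generalized Stirling permutation (GSP) is a planar tree with a bijection $\kappa$ from its internal nodes to $\{1,\dots,N\}$ increasing from each internal node to its internal children. Its word $\mathbf w(u)=u_1\cdots u_n$: a leaf has empty word; a node $x$ with children $c_1,\dots,c_k$ has word $\mathbf w(c_1)\kappa(x)\mathbf w(c_2)\cdots\kappa(x)\mathbf w(c_k)$. $\mathrm{GD}(u)=\{i\in\{1,\dots,n-1\}: u_a>u_b \text{ for all } a\le i<b\}$. For each planar tree $t$ there is exactly one GSP with underlying tree $t$ whose word is $213$-avoiding (no $i<j<k$ with $w_k>w_i>w_j$); it is denoted $\iota(t)$. *)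

(* Defs.v *)
From mathcomp Require Import all_boot.
Set Implicit Arguments. Unset Strict Implicit. Unset Printing Implicit Defensive.

(* Planar (rooted, ordered) trees; a node with an empty child list is not
   used (validity is enforced by [planar]). *)
Inductive ptree : Type := Leaf | Node of seq ptree.

Fixpoint planar (t : ptree) : bool :=
  match t with
  | Leaf => true
  | Node cs => (1 < size cs) && all planar cs
  end.

Fixpoint nleaves (t : ptree) : nat :=
  match t with
  | Leaf => 1
  | Node cs => sumn (map nleaves cs)
  end.

Definition deg (t : ptree) : nat := (nleaves t).-1.

(* s / r : identify the root of s with the leftmost leaf of r *)
Fixpoint graft (s r : ptree) : ptree :=
  match r with
  | Leaf => s
  | Node [::] => Node [::]
  | Node (c :: cs) => Node (graft s c :: cs)
  end.

Definition GDtree (t : ptree) (i : nat) : Prop :=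
  [/\ 1 <= i, i <= (deg t).-1 &
      exists s r, [/\ planar s, planar r, deg s = i & t = graft s r]].

Inductive ltree : Type := LLeaf | LNode of nat & seq ltree.

Fixpoint forget (u : ltree) : ptree :=
  match u with
  | LLeaf => Leaf
  | LNode _ cs => Node (map forget cs)
  end.

Fixpoint labels (u : ltree) : seq nat :=
  match u with
  | LLeaf => [::]
  | LNode k cs => k :: flatten (map labels cs)
  end.

Fixpoint increasing (u : ltree) : bool :=
  match u with
  | LLeaf => true
  | LNode k cs =>
      all (fun c => match c with LLeaf => true | LNode k' _ => k < k' end) cs
      && all increasing cs
  end.

(* generalized Stirling permutation: planar underlying tree, labelling is a
   bijection internal nodes -> {1..N}, increasing *)
Definition GSP (u : ltree) : Prop :=
  [/\ planar (forget u),
      perm_eq (labels u) (iota 1 (size (labels u))) & increasing u].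

Fixpoint word (u : ltree) : seq nat :=
  match u with
  | LLeaf => [::]
  | LNode k cs =>
      match cs with
      | [::] => [::]
      | c :: cs' => word c ++ flatten (map (fun c' => k :: word c') cs')
      end
  end.

Definition avoids213 (w : seq nat) : Prop :=
  forall i j k, i < j -> j < k -> k < size w ->
    ~ (nth 0 w j < nth 0 w i /\ nth 0 w i < nth 0 w k).

(* GD(u) for a GSP with word u_1...u_n (1-indexed positions a, b) *)
Definition GDgsp (u : ltree) (i : nat) : Prop :=
  let w := word u in
  [/\ 1 <= i, i <= (size w).-1 &
      forall a b, 1 <= a -> a <= i -> i < b -> b <= size w ->
        nth 0 w b.-1 < nth 0 w a.-1].

(* Main.v *)
Require Import Defs.
From mathcomp Require Import all_boot zify.

Fixpoint ptree_ind2 (P : ptree -> Prop) (HL : P Leaf)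
  (HN : forall cs, (forall c, List.In c cs -> P c) -> P (Node cs)) (t : ptree) : P t :=
  match t with
  | Leaf => HL
  | Node cs => HN cs ((fix F (l : seq ptree) : forall c, List.In c l -> P c :=
       match l with
       | [::] => fun c (H : List.In c [::]) => False_ind (P c) H
       | c0 :: l0 => fun c H => match H with
            | or_introl E => eq_ind c0 P (ptree_ind2 P HL HN c0) c E
            | or_intror H' => F l0 c H' end
       end) cs)
  end.

Fixpoint ltree_ind2 (P : ltree -> Prop) (HL : P LLeaf)
  (HN : forall k cs, (forall c, List.In c cs -> P c) -> P (LNode k cs)) (t : ltree) : P t :=
  match t with
  | LLeaf => HL
  | LNode k cs => HN k cs ((fix F (l : seq ltree) : forall c, List.In c l -> P c :=
       match l with
       | [::] => fun c (H : List.In c [::]) => False_ind (P c) H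
       | c0 :: l0 => fun c H => match H with
            | or_introl E => eq_ind c0 P (ltree_ind2 P HL HN c0) c E
            | or_intror H' => F l0 c H' end
       end) cs)
  end.

Lemma all_In (T : Type) (P : pred T) l c : all P l -> List.In c l -> P c.
Proof. elim: l => //= a l IH /andP[Ha Hl] [<-|H]; [exact: Ha| exact: IH]. Qed.

Lemma flatten_In (T : Type) (f : T -> seq nat) l x :
  x \in flatten (map f l) -> exists c, List.In c l /\ x \in f c.
Proof.
elim: l => //= a l IH; rewrite mem_cat => /orP[H|/IH [c [H1 H2]]].
  by exists a; split; [left|].
by exists c; split; [right|].
Qed.

Lemma In_flatten (T : Type) (f : T -> seq nat) l x c :
  List.In c l -> x \in f c -> x \in flatten (map f l).
Proof.
elim: l => //= a l IH [<- H|H1 H2]; rewrite mem_cat; first by rewrite H.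
by rewrite IH ?orbT.
Qed.

Lemma word_sub u x : x \in word u -> x \in labels u.
Proof.
elim/ltree_ind2: u x => // k [|c cs] IH x //=.
rewrite in_cons mem_cat mem_cat => /orP[H|H].
  by rewrite (IH c (or_introl erefl) _ H) orbT.
case/flatten_In: H => c' [Hin]; rewrite in_cons => /orP[->//|H].
by rewrite (In_flatten _ _ _ _ _ Hin (IH c' (or_intror Hin) _ H)) !orbT.
Qed.

Lemma inc_lt u : increasing u -> forall k',
  (match u with LLeaf => true | LNode r _ => k' < r end) ->
  forall x, x \in labels u -> k' < x.
Proof.
elim/ltree_ind2: u => // r cs IH /= /andP[Hc Hi] k' Hk x.
rewrite in_cons => /orP[/eqP->//|/flatten_In [c [Hin Hx]]].
apply: (IH c Hin (all_In _ _ _ _ Hi Hin)) Hx.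
have := all_In _ _ _ _ Hc Hin; case: c {Hin} => // r' _ H; exact: ltn_trans Hk H.
Qed.

Lemma inc_child k cs c x : increasing (LNode k cs) -> List.In c cs ->
  x \in labels c -> k < x.
Proof.
move=> /= /andP[Hc Hi] Hin.
exact: (inc_lt _ (all_In _ _ _ _ Hi Hin) k (all_In _ _ _ _ Hc Hin) x).
Qed.


Definition GDw (w : seq nat) i := [/\ 1 <= i, i <= (size w).-1 &
      forall a b, 1 <= a -> a <= i -> i < b -> b <= size w ->
        nth 0 w b.-1 < nth 0 w a.-1].

Lemma av_prefix A B : avoids213 (A ++ B) -> avoids213 A.
Proof.
move=> H i j k Hij Hjk Hk; have := H i j k Hij Hjk.
rewrite size_cat !nth_cat.
have -> : i < size A by lia.
have -> : j < size A by lia.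
rewrite Hk; apply; lia.
Qed.

Lemma av_app (A B : seq nat) : avoids213 A -> avoids213 B ->
  (forall x y, x \in A -> y \in B -> y <= x) -> avoids213 (A ++ B).
Proof.
move=> HA HB Hxy i j k Hij Hjk; rewrite size_cat => Hk.
rewrite !nth_cat.
case: (ltnP k (size A)) => Hk'.
  have -> : i < size A by lia.
  have -> : j < size A by lia.
  exact: HA.
case: (ltnP i (size A)) => Hi'.
  move=> -[_ H2].
  have Hkb : k - size A < size B by lia.
  have := Hxy _ _ (mem_nth 0 Hi') (mem_nth 0 Hkb); by rewrite leqNgt H2.
have -> : (j < size A) = false by lia.
apply: (HB (i - size A) (j - size A) (k - size A)); lia.
Qed.

Lemma av_cons (k : nat) (B : seq nat) : avoids213 B -> (forall y, y \in B -> k <= y) ->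
  avoids213 (k :: B).
Proof.
move=> HB Hy [|i] [|j] [|l] //= Hij Hjl Hl.
  have Hj : j < size B by lia.
  move=> [H _]; have := Hy _ (mem_nth 0 Hj); by rewrite leqNgt H.
apply: HB; lia.
Qed.

Lemma GDw_split (A : seq nat) (k : nat) (W : seq nat) (i : nat) :
  (forall x, x \in A -> k < x) -> (forall y, y \in W -> k <= y) ->
  (forall x y, x \in A -> y \in W -> y != k -> y != x) ->
  avoids213 (A ++ k :: W) ->
  GDw (A ++ k :: W) i <-> (1 <= i /\ i = size A) \/ GDw A i.
Proof.
move=> F1 F2 F3 Hav.
have Q : forall a0 b0, a0 < size A -> size A <= b0 -> b0 < size A + (size W).+1 ->
    nth 0 (A ++ k :: W) b0 < nth 0 (A ++ k :: W) a0.
  move=> a0 b0 Ha Hb Hb'.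
  rewrite !nth_cat Ha.
  have -> : (b0 < size A) = false by lia.
  have Hx := F1 _ (mem_nth 0 Ha).
  case E: (b0 - size A) => [|m] /=; first by [].
  have Hm : m < size W by lia.
  have Hy := mem_nth 0 Hm.
  have Hle : nth 0 W m <= nth 0 A a0.
    have := Hav a0 (size A) b0; rewrite size_cat /= !nth_cat Ha ltnn subnn E /=.
    have -> : (b0 < size A) = false by lia.
    move=> H.
    have H' : ~ (k < nth 0 A a0 /\ nth 0 A a0 < nth 0 W m) by apply: H => //; rewrite -subn_gt0 E.
    rewrite leqNgt; apply/negP => Hlt; exact: H'.
  case: (eqVneq (nth 0 W m) k) => [->//|Hne].
  by rewrite ltn_neqAle Hle andbT (F3 _ _ (mem_nth 0 Ha) Hy Hne).
rewrite /GDw size_cat /=; split.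
  case=> H1 H2 H3.
  case: (ltngtP i (size A)) => Hi.
  - right; split => //; first lia.
    move=> a b Ha Hai Hib Hb; have := H3 a b Ha Hai Hib; rewrite !nth_cat.
    have -> : b.-1 < size A by lia.
    have -> : a.-1 < size A by lia.
    apply; lia.
  - exfalso.
    have := H3 (size A).+1 (size A + (size W).+1) erefl Hi.
    have Hlast : k <= nth 0 (A ++ k :: W) (size A + (size W).+1).-1.
      rewrite nth_cat.
      have -> : ((size A + (size W).+1).-1 < size A) = false by lia.
      have Hm : (size A + (size W).+1).-1 - size A < size (k :: W) by rewrite /=; lia.
      have := mem_nth 0 Hm; rewrite in_cons => /orP[/eqP->//|]; exact: F2.
    move=> H; have := H ltac:(lia) (leqnn _).
    have Ek : nth 0 (A ++ k :: W) (size A) = k by rewrite nth_cat ltnn subnn.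
    rewrite [(size A).+1.-1]/= Ek => H'.
    by rewrite ltnNge Hlast in H'.
  - by left.
case=> [[Hi Ei]|[H1 H2 H3]]; first subst i.
  split => //; first lia.
  move=> a b Ha Hai Hib Hb; apply: Q; lia.
split => //; first lia.
move=> a b Ha Hai Hib Hb.
case: (leqP b (size A)) => Hb'.
  rewrite !nth_cat.
  have -> : b.-1 < size A by lia.
  have -> : a.-1 < size A by lia.
  exact: H3.
apply: Q; lia.
Qed.


Lemma nleaves_pos t : planar t -> 0 < nleaves t.
Proof.
elim/ptree_ind2: t => // [[|c [|c' cs]]] IH //= /andP[Hc _].
by rewrite addn_gt0 (IH c (or_introl erefl) Hc).
Qed.

Lemma nleaves_first c cs : planar (Node (c :: cs)) -> nleaves c < nleaves (Node (c :: cs)).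
Proof.
case: cs => [|c' cs] //= /and3P[_ Hc' _].
have := nleaves_pos c' Hc'; lia.
Qed.

Lemma graft_nleaves s r : planar r -> nleaves (graft s r) = (nleaves s + nleaves r).-1.
Proof.
elim/ptree_ind2: r => [|[|c cs] IH] /=; first by rewrite addn1.
  by [].
move=> /andP[_ /andP[Hc _]].
rewrite (IH c (or_introl erefl) Hc).
have := nleaves_pos c Hc; lia.
Qed.

Lemma GDtree_split c cs i : planar (Node (c :: cs)) ->
  GDtree (Node (c :: cs)) i <-> (1 <= i /\ i = deg c) \/ GDtree c i.
Proof.
move=> Hp; have Hlt := nleaves_first _ _ Hp.
move: (Hp) => /= /andP[Hsz /andP[Hpc Hpcs]].
rewrite /GDtree /deg; split.
  case=> H1 H2 [s [r [Hs Hr Hds Ht]]].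
  case: r Hr Ht => [|[|r1 rs]] //= Hr.
    move=> Et; subst; move: H2; rewrite /deg; have := nleaves_pos _ Hs; lia.
  case=> Ec Ecs.
  move: Hr => /andP[_ /andP[Hr1 Hrs]].
  case: r1 Hr1 Ec => [|rs1] Hr1 Ec /=.
    by left; split; rewrite // Ec /= Hds.
  right; split => //.
    rewrite Ec graft_nleaves //.
    have := nleaves_pos _ Hs.
    have : 1 < nleaves (Node rs1).
      move: Hr1 {Ec} => /= /andP[]; case: rs1 => [|a [|b l]] //= _ /and3P[Ha Hb _].
      have := nleaves_pos _ Ha; have := nleaves_pos _ Hb; lia.
    move: Hds; rewrite /deg; lia.
  by exists s, (Node rs1); split.
case=> [[Hi Ei]|[H1 H2 [s [r [Hs Hr Hds Ht]]]]].
  split => //; first lia.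
  exists c, (Node (Leaf :: cs)); split => //=.
  by rewrite Hpcs; move: Hsz; case: cs {Hp Hlt Hpcs}.
split => //; first lia.
exists s, (Node (r :: cs)); split => //=; last by rewrite -Ht.
by rewrite Hr Hpcs; move: Hsz; case: cs {Hp Hlt Hpcs}.
Qed.


Lemma size_flat k cs :
  (forall c, List.In c cs -> planar (forget c) -> (size (word c)).+1 = nleaves (forget c)) ->
  all planar (map forget cs) ->
  size (flatten (map (fun c' => k :: word c') cs)) = sumn (map nleaves (map forget cs)).
Proof.
elim: cs => //= c cs IH H /andP[Hc Hcs].
rewrite size_cat /= (IH (fun c0 h => H c0 (or_intror h)) Hcs).
by rewrite -(H c (or_introl erefl) Hc).
Qed.

Lemma size_word u : planar (forget u) -> (size (word u)).+1 = nleaves (forget u).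
Proof.
elim/ltree_ind2: u => // k [|c cs] IH //= /andP[_ /andP[Hc Hcs]].
rewrite size_cat -addSn (IH c (or_introl erefl) Hc).
by rewrite (size_flat k cs (fun c0 h => IH c0 (or_intror h)) Hcs).
Qed.

Lemma part2 u : planar (forget u) -> uniq (labels u) -> increasing u ->
  avoids213 (word u) -> forall i, GDtree (forget u) i <-> GDw (word u) i.
Proof.
elim/ltree_ind2: u => [|k cs IH] Hp Hu Hinc Hav i.
  rewrite /GDtree /GDw /deg /=; split; case=> H1 H2; lia.
case: cs IH Hp Hu Hinc Hav => [|c1 [|c2 cs]] IH Hp Hu Hinc Hav //.
change (forget (LNode k [:: c1, c2 & cs])) with (Node (forget c1 :: map forget (c2 :: cs))).
change (forget (LNode k [:: c1, c2 & cs])) with (Node (forget c1 :: map forget (c2 :: cs))) in Hp.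
change (word (LNode k [:: c1, c2 & cs])) with (word c1 ++ k :: word (LNode k (c2 :: cs))).
change (word (LNode k [:: c1, c2 & cs])) with (word c1 ++ k :: word (LNode k (c2 :: cs))) in Hav.
move: (Hp) => /= /andP[Hp1 _].
move: (Hu) => /= /andP[_]; rewrite cat_uniq => /and3P[Hu1 Hdis _].
move: (Hinc) => /= /andP[_ /andP[Hi1 _]].
have E1 := GDtree_split _ _ i Hp.
have F1 : forall x, x \in word c1 -> k < x.
  move=> x /word_sub Hx; exact: (inc_child _ _ _ _ Hinc (or_introl erefl) Hx).
have F2' : forall y, y \in word (LNode k (c2 :: cs)) -> y != k ->
    y \in flatten (map labels (c2 :: cs)).
  by move=> y /word_sub; rewrite /= in_cons => /orP[/eqP->|]; rewrite ?eqxx.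
have F2 : forall y, y \in word (LNode k (c2 :: cs)) -> k <= y.
  move=> y Hy; case: (eqVneq y k) => [->//|Hne].
  case/flatten_In: (F2' y Hy Hne) => c [Hin Hyc].
  exact/ltnW/(inc_child _ _ _ _ Hinc (or_intror Hin) Hyc).
have F3 : forall x y, x \in word c1 -> y \in word (LNode k (c2 :: cs)) -> y != k -> y != x.
  move=> x y /word_sub Hx Hy Hne; have Hy' := F2' y Hy Hne.
  apply/eqP => E; subst y.
  by move/hasPn: Hdis => /(_ x Hy'); rewrite Hx.
have E2 := GDw_split _ _ _ i F1 F2 F3 Hav.
have E3 := IH c1 (or_introl erefl) Hp1 Hu1 Hi1 (av_prefix _ _ Hav) i.
have Hd : deg (forget c1) = size (word c1) by rewrite /deg -(size_word _ Hp1).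
rewrite Hd in E1.
tauto.
Qed.


Fixpoint nint (t : ptree) : nat :=
  match t with Leaf => 0 | Node cs => (sumn (map nint cs)).+1 end.

Fixpoint lab (t : ptree) (b : nat) {struct t} : ltree :=
  match t with
  | Leaf => LLeaf
  | Node cs => LNode b ((fix labs (cs : seq ptree) (b : nat) : seq ltree :=
      match cs with
      | [::] => [::]
      | c :: cs' => lab c (b + sumn (map nint cs')) :: labs cs' b
      end) cs b.+1)
  end.

Fixpoint labs (cs : seq ptree) (b : nat) : seq ltree :=
  match cs with
  | [::] => [::]
  | c :: cs' => lab c (b + sumn (map nint cs')) :: labs cs' b
  end.

Lemma lab_node cs b : lab (Node cs) b = LNode b (labs cs b.+1).
Proof. rewrite /=; congr LNode; elim: cs (b.+1) => //= c cs IH b'; by rewrite IH. Qed.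

Lemma forget_lab t b : forget (lab t b) = t.
Proof.
elim/ptree_ind2: t b => // cs IH b; rewrite lab_node /=; congr Node.
elim: cs IH (b.+1) => //= c cs IHl IH b'.
by rewrite (IH c (or_introl erefl)) IHl // => c0 h; apply: IH; right.
Qed.

Lemma labels_lab t b : perm_eq (labels (lab t b)) (iota b (nint t)).
Proof.
elim/ptree_ind2: t b => // cs IH b; rewrite lab_node /= perm_cons.
elim: cs IH (b.+1) => //= c cs IHl IH b'.
rewrite [nint c + _]addnC iotaD perm_catC.
apply: perm_cat; last exact: (IH c (or_introl erefl)).
by apply: IHl => c0 h; apply: IH; right.
Qed.

Lemma labels_lab_mem t b x : x \in labels (lab t b) -> b <= x < b + nint t.
Proof. by rewrite (perm_mem (labels_lab t b)) mem_iota. Qed.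

Lemma inc_labs b cs b' : (forall c, List.In c cs -> forall b, increasing (lab c b)) ->
  b < b' ->
  all (fun c => match c with LLeaf => true | LNode k' _ => b < k' end) (labs cs b')
  && all increasing (labs cs b').
Proof.
elim: cs => //= c cs IHl IH Hb.
rewrite (IH c (or_introl erefl)) /=.
have -> : (match lab c (b' + sumn (map nint cs)) with
          | LLeaf => true | LNode k' _ => b < k' end) = true.
  case: c {IH} => [|cs0] //; rewrite lab_node; lia.
by move: (IHl (fun c0 h => IH c0 (or_intror h)) Hb) => /andP[-> ->].
Qed.

Lemma inc_lab t b : increasing (lab t b).
Proof.
elim/ptree_ind2: t b => // cs IH b; rewrite lab_node /=.
exact: inc_labs.
Qed.

Lemma av_lab t b : avoids213 (word (lab t b)).
Proof.
elim/ptree_ind2: t b => [|cs IH] b.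
  by move=> i j k /= _ _.
elim: cs IH b => [|c cs IHl] IH b.
  by move=> i j k /= _ _.
case: cs IHl IH => [|c' cs] IHl IH.
  rewrite lab_node /= cats0; exact: IH (or_introl erefl) _.
rewrite lab_node.
change (word (LNode b (labs [:: c, c' & cs] b.+1))) with
  (word (lab c (b.+1 + sumn (map nint (c' :: cs)))) ++ b :: word (LNode b (labs (c' :: cs) b.+1))).
rewrite -lab_node.
have IH' : forall c0, List.In c0 (c' :: cs) -> forall b, avoids213 (word (lab c0 b)).
  by move=> c0 h; apply: IH; right.
apply: av_app.
- exact: IH (or_introl erefl) _.
- apply: av_cons; first exact: IHl.
  by move=> y /word_sub /labels_lab_mem /andP[].
- move=> x y /word_sub /labels_lab_mem /andP[Hx _].
  rewrite in_cons => /orP[/eqP->|/word_sub /labels_lab_mem /andP[_ Hy]].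
    lia.
  change (nint (Node (c' :: cs))) with (sumn (map nint (c' :: cs))).+1 in Hy; lia.
Qed.

Theorem mainTheorem11 (t : ptree) : planar t ->
  (exists u : ltree, [/\ GSP u, forget u = t & avoids213 (word u)]) /\
  (forall u : ltree, GSP u -> forget u = t -> avoids213 (word u) ->
     forall i, GDtree t i <-> GDgsp u i).
Proof.
move=> Hp; split.
  exists (lab t 1); split; last exact: av_lab.
  - split; first by rewrite forget_lab.
      by rewrite (perm_size (labels_lab t 1)) size_iota; exact: labels_lab.
    exact: inc_lab.
  - exact: forget_lab.
move=> u [Hpu Hperm Hinc] Ht Hav i; subst t.
apply: (part2 u Hpu _ Hinc Hav i).
by rewrite (perm_uniq Hperm) iota_uniq.
Qed.
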